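(* Let $a,b\in\mathbb{R}^2\cong\mathbb{C}$ with $\|b-a\|=\sin 1$, put $\alpha_0=b-a$, $c_0=\sin^2 1$, and let $(c_k)_{k\ge0}$ be defined by $\arcsin\sqrt{(c_k-c_{k-1})/c_k}=2^{-k}$ for $k\ge1$ (equivalently $c_k=c_{k-1}/\cos^2(2^{-k})$), so that $(c_k)$ is increasing, $c_k\to1$ and $\sum_k\sqrt{c_k-c_{k-1}}<\infty$. Let $f(t,\omega)=a+\int_0^t\alpha(s,\omega)\,ds$ where $\alpha(t,\omega)=\lim_n\alpha_n(t,\omega)$. Then for each $t\in[0,1]\setminus D$, $\dot f(t,\omega)$ exists for all $\omega$ and the random variable $\omega\mapsto\dot f(t,\omega)$ is uniformly distributed on the arc $C_0=\{z_0e^{i\theta}:-1\le\theta\le1\}$ of the unit circle, where $z_0=(b-a)/\|b-a\|$; that is, for every subarc $C\subseteq C_0$, $P\{\omega:\dot f(t,\omega)\in C\}=\lambda(C)/2$, where $\lambda$ is arc-length (Lebesgue) measure on the unit circle.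
   Context: $D$ denotes the set of dyadic rationals in $[0,1]$. For $k\ge1$ the Rademacher function $r_k:[0,1]\to\{-1,1\}$ is $r_k(t)=(-1)^{\lfloor 2^k t\rfloor}$ for $t<1$ and $r_k(1)=-1$. For $k\ge1$ and $j\in\{1,\dots,2^{k-1}\}$ let $I_{kj}=\left[\frac{j-1}{2^{k-1}},\frac{j}{2^{k-1}}\right)$ if $j<2^{k-1}$ and $I_{k,2^{k-1}}=\left[\frac{2^{k-1}-1}{2^{k-1}},1\right]$; $1_{I_{kj}}$ is its indicator. Let $(\Omega,\mathcal F,P)$ be the product probability space $\Omega=\prod_{k\ge1}\prod_{j=1}^{2^{k-1}}\{-1,1\}$, each factor uniform, with coordinate maps $d_{kj}:\Omega\to\{-1,1\}$. With $\theta_k=\arcsin\sqrt{(c_k-c_{k-1})/c_k}$, put $\Theta_n(t,\omega)=\sum_{k=1}^{n}\sum_{j=1}^{2^{k-1}}r_k(t)1_{I_{kj}}(t)d_{kj}(\omega)\theta_k$ and $\alpha_n(t,\omega)=\sqrt{c_n/c_0}\,\alpha_0\exp(i\Theta_n(t,\omega))$. *)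

(* Defs.v *)
From Stdlib Require Import Reals Lra Lia ZArith List.
Open Scope R_scope.

Definition cplx := (R * R)%type.
Definition cadd (z w : cplx) : cplx := (fst z + fst w, snd z + snd w).
Definition csub (z w : cplx) : cplx := (fst z - fst w, snd z - snd w).
Definition cmul (z w : cplx) : cplx :=
  (fst z * fst w - snd z * snd w, fst z * snd w + snd z * fst w).
Definition cscale (r : R) (z : cplx) : cplx := (r * fst z, r * snd z).
Definition cnorm (z : cplx) : R := sqrt (fst z ^ 2 + snd z ^ 2).
Definition cexpi (th : R) : cplx := (cos th, sin th).

Fixpoint rsum1 (n : nat) (f : nat -> R) : R :=
  match n with O => 0 | S m => rsum1 m f + f (S m) end.

Fixpoint cseq (k : nat) : R :=
  match k with
  | O => sin 1 ^ 2
  | S m => cseq m / (cos (/ 2 ^ (S m))) ^ 2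
  end.
Definition theta (k : nat) : R := asin (sqrt ((cseq k - cseq (pred k)) / cseq k)).

Definition dyadic (t : R) : Prop :=
  0 <= t <= 1 /\ exists k m : nat, t = INR m / 2 ^ k.

Definition floorR (x : R) : Z := Int_part x.
Definition rademacher (k : nat) (t : R) : R :=
  if Rlt_dec t 1 then (if Z.even (floorR (2 ^ k * t)) then 1 else -1) else -1.
Definition indI (k j : nat) (t : R) : R :=
  let a := INR (j - 1) / 2 ^ (k - 1) in
  let b := INR j / 2 ^ (k - 1) in
  if Nat.eqb j (2 ^ (k - 1))%nat
  then (if Rle_dec a t then (if Rle_dec t 1 then 1 else 0) else 0)
  else (if Rle_dec a t then (if Rlt_dec t b then 1 else 0) else 0).

(* Omega = product of copies of {-1,1} indexed by pairs (k,j); coordinate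
   (k,j) true means d_{kj} = 1, false means d_{kj} = -1. Coordinates outside
   k >= 1, 1 <= j <= 2^(k-1) are present but unused. *)
Definition Omega := nat -> nat -> bool.
Definition dcoord (k j : nat) (w : Omega) : R := if w k j then 1 else -1.

Definition Theta (n : nat) (t : R) (w : Omega) : R :=
  rsum1 n (fun k => rsum1 (2 ^ (k - 1)) (fun j =>
     rademacher k t * indI k j t * dcoord k j w * theta k)).
Definition alpha_n (alpha0 : cplx) (n : nat) (t : R) (w : Omega) : cplx :=
  cscale (sqrt (cseq n / cseq 0)) (cmul alpha0 (cexpi (Theta n t w))).

Definition cyl := list ((nat * nat) * bool).
Definition cyl_mem (c : cyl) (w : Omega) : Prop :=
  Forall (fun p => w (fst (fst p)) (snd (fst p)) = snd p) c.
Definition cyl_meas (c : cyl) : R := (/ 2) ^ length c.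

Definition cover_sum (A : Omega -> Prop) (s : R) : Prop :=
  exists cs : nat -> option cyl,
    (forall n c, cs n = Some c -> NoDup (map fst c)) /\
    (forall w, A w -> exists n c, cs n = Some c /\ cyl_mem c w) /\
    infinite_sum (fun n => match cs n with Some c => cyl_meas c | None => 0 end) s.

Definition outer_prob (A : Omega -> Prop) (x : R) : Prop :=
  (forall s, cover_sum A s -> x <= s) /\
  (forall y, (forall s, cover_sum A s -> y <= s) -> y <= x).

(* P(A) = x : A is measurable for the (completed) product measure with
   probability x; for a probability outer measure generated by an algebra this
   is equivalent to P*(A) = x and P*(complement A) = 1 - x. *)
Definition prob_is (A : Omega -> Prop) (x : R) : Prop :=
  outer_prob A x /\ outer_prob (fun w => ~ A w) (1 - x).

Definition has_deriv (g : R -> cplx) (t : R) (v : cplx) : Prop :=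
  derivable_pt_lim (fun s => fst (g s)) t (fst v) /\
  derivable_pt_lim (fun s => snd (g s)) t (snd v).

Definition in_arc (z0 : cplx) (th1 th2 : R) (cl1 cl2 : bool) (v : cplx) : Prop :=
  exists th,
    (if cl1 then th1 <= th else th1 < th) /\
    (if cl2 then th <= th2 else th < th2) /\
    v = cmul z0 (cexpi th).

(* Main.v *)
Require Import Defs.
From Stdlib Require Import Reals Lra Lia List ZArith Cantor ClassicalEpsilon Classical.
Open Scope R_scope.
Import ListNotations.

Definition key_eq_dec : forall p q : nat * nat, {p = q} + {p <> q}.
Proof. decide equality; apply Nat.eq_dec. Defined.

Fixpoint rmk (q : nat * nat) (c : cyl) : cyl :=
  match c with
  | nil => nil
  | p :: c' => if key_eq_dec (fst p) q then rmk q c' else p :: rmk q c'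
  end.

Fixpoint lookup (q : nat * nat) (c : cyl) : option bool :=
  match c with
  | nil => None
  | p :: c' => if key_eq_dec (fst p) q then Some (snd p) else lookup q c'
  end.

Lemma cyl_mem_iff c w : cyl_mem c w <-> (forall p, In p c -> w (fst (fst p)) (snd (fst p)) = snd p).
Proof. unfold cyl_mem; rewrite Forall_forall; tauto. Qed.

Lemma rmk_in q c p : In p (rmk q c) -> In p c /\ fst p <> q.
Proof.
  induction c as [|p' c IH]; simpl; [tauto|].
  destruct (key_eq_dec (fst p') q) as [e|n].
  - intros H; destruct (IH H); tauto.
  - intros [<-|H]; [tauto|destruct (IH H); tauto].
Qed.

Lemma lookup_none q c p : lookup q c = None -> In p c -> fst p <> q.
Proof.
  induction c as [|p' c IH]; simpl; [tauto|].
  destruct (key_eq_dec (fst p') q) as [e|n]; [discriminate|].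
  intros H [<-|H']; auto.
Qed.

Lemma lookup_some q c b : lookup q c = Some b -> In (q, b) c.
Proof.
  induction c as [|p' c IH]; simpl; [discriminate|].
  destruct (key_eq_dec (fst p') q) as [e|n].
  - intros H; inversion H; subst; left; destruct p'; reflexivity.
  - intros H; right; auto.
Qed.

Lemma rmk_notin q c : ~ In q (map fst c) -> rmk q c = c.
Proof.
  induction c as [|p c IH]; simpl; auto.
  intros H; destruct (key_eq_dec (fst p) q) as [e|n]; [tauto|].
  rewrite IH; tauto.
Qed.

Lemma rmk_nodup q c : NoDup (map fst c) -> NoDup (map fst (rmk q c)).
Proof.
  induction c as [|p c IH]; simpl; auto.
  intros H; inversion H; subst.
  destruct (key_eq_dec (fst p) q); auto.
  simpl; constructor; auto.
  intros Hin; apply in_map_iff in Hin; destruct Hin as [x [Hx Hin]].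
  apply rmk_in in Hin; destruct Hin as [Hin _].
  apply H2; rewrite <- Hx; apply in_map; auto.
Qed.

Lemma rmk_length q c b : NoDup (map fst c) -> lookup q c = Some b ->
  S (length (rmk q c)) = length c.
Proof.
  induction c as [|p c IH]; simpl; [discriminate|].
  intros H; inversion H; subst.
  destruct (key_eq_dec (fst p) q) as [e|n].
  - intros _; rewrite rmk_notin; auto. rewrite <- e; auto.
  - intros Hl; simpl; rewrite IH; auto.
Qed.

Definition restr (q : nat * nat) (b : bool) (c : cyl) : list cyl :=
  match lookup q c with
  | None => [c]
  | Some b' => if Bool.eqb b b' then [rmk q c] else []
  end.

Fixpoint lsum (l : list cyl) : R :=
  match l with nil => 0 | c :: l' => cyl_meas c + lsum l' end.

Fixpoint tlen (l : list cyl) : nat :=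
  match l with nil => 0%nat | c :: l' => (length c + tlen l')%nat end.

Lemma lsum_app l1 l2 : lsum (l1 ++ l2) = lsum l1 + lsum l2.
Proof. induction l1; simpl; lra. Qed.

Lemma tlen_app l1 l2 : tlen (l1 ++ l2) = (tlen l1 + tlen l2)%nat.
Proof. induction l1; simpl; lia. Qed.

Lemma cyl_meas_pos c : 0 < cyl_meas c.
Proof. unfold cyl_meas; apply pow_lt; lra. Qed.

Lemma lsum_ge l c : In c l -> cyl_meas c <= lsum l.
Proof.
  induction l as [|c' l IH]; simpl; [tauto|].
  assert (0 <= lsum l).
  { clear IH; induction l; simpl; [lra|]. pose proof (cyl_meas_pos a); lra. }
  intros [<-|H']; [lra|]. pose proof (cyl_meas_pos c'); specialize (IH H'); lra.
Qed.

Lemma restr_meas q c : NoDup (map fst c) ->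
  2 * cyl_meas c = lsum (restr q true c) + lsum (restr q false c).
Proof.
  intros Hn; unfold restr.
  destruct (lookup q c) as [b'|] eqn:E.
  - assert (Hl := rmk_length q c b' Hn E).
    assert (cyl_meas c * 2 = cyl_meas (rmk q c)).
    { unfold cyl_meas; rewrite <- Hl; simpl; field. }
    destruct b'; simpl; lra.
  - simpl; lra.
Qed.

Definition rall (q : nat * nat) (b : bool) (L : list cyl) : list cyl :=
  flat_map (restr q b) L.

Lemma rall_meas q L : (forall c, In c L -> NoDup (map fst c)) ->
  2 * lsum L = lsum (rall q true L) + lsum (rall q false L).
Proof.
  induction L as [|c L IH]; simpl; [lra|].
  intros H; rewrite !lsum_app.
  pose proof (restr_meas q c (H c (or_introl eq_refl))).
  pose proof (IH (fun c H' => H c (or_intror H'))). unfold rall in *. lra.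
Qed.

Lemma restr_tlen q b c : (tlen (restr q b c) <= length c)%nat.
Proof.
  unfold restr.
  destruct (lookup q c) eqn:E; simpl; [|lia].
  destruct (Bool.eqb b b0); simpl; [|lia].
  clear; induction c; simpl; [lia|]. destruct (key_eq_dec (fst a) q); simpl; lia.
Qed.

Lemma restr_tlen_lt q b c : NoDup (map fst c) -> lookup q c <> None ->
  (tlen (restr q b c) < length c)%nat.
Proof.
  intros Hn; unfold restr.
  destruct (lookup q c) as [b'|] eqn:E; [|tauto]. intros _.
  destruct (Bool.eqb b b'); simpl.
  - pose proof (rmk_length q c b' Hn E); lia.
  - destruct c; simpl in *; [discriminate| lia].
Qed.

Lemma rall_tlen q b L : (tlen (rall q b L) <= tlen L)%nat.
Proof.
  induction L as [|c L IH]; simpl; [lia|].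
  rewrite tlen_app. pose proof (restr_tlen q b c); lia.
Qed.

Lemma rall_tlen_lt q b L c : (forall c, In c L -> NoDup (map fst c)) ->
  In c L -> lookup q c <> None -> (tlen (rall q b L) < tlen L)%nat.
Proof.
  induction L as [|c' L IH]; simpl; [tauto|].
  intros Hn [->|Hin] Hl; rewrite tlen_app.
  - pose proof (restr_tlen_lt q b c (Hn c (or_introl eq_refl)) Hl).
    pose proof (rall_tlen q b L); lia.
  - pose proof (restr_tlen q b c'). specialize (IH (fun c H => Hn c (or_intror H)) Hin Hl); lia.
Qed.

Lemma rall_nodup q b L : (forall c, In c L -> NoDup (map fst c)) ->
  forall c, In c (rall q b L) -> NoDup (map fst c).
Proof.
  intros H c Hc; unfold rall in Hc; apply in_flat_map in Hc.
  destruct Hc as [c0 [Hc0 Hin]]. unfold restr in Hin.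
  destruct (lookup q c0); [destruct (Bool.eqb b b0)|]; simpl in Hin;
   try destruct Hin as [<-|[]]; try tauto.
  - apply rmk_nodup; auto.
  - auto.
Qed.

Definition upd (w : Omega) (q : nat * nat) (b : bool) : Omega :=
  fun k j => if key_eq_dec (k, j) q then b else w k j.

Lemma rall_cover q b L :
  (forall w, exists c, In c L /\ cyl_mem c w) ->
  forall w, exists c, In c (rall q b L) /\ cyl_mem c w.
Proof.
  intros H w. destruct (H (upd w q b)) as [c [Hin Hm]].
  rewrite cyl_mem_iff in Hm.
  destruct (lookup q c) as [b'|] eqn:E.
  - assert (Hb : b = b').
    { apply lookup_some in E. specialize (Hm _ E). simpl in Hm. unfold upd in Hm.
      destruct (key_eq_dec (fst q, snd q) q) as [_|n]; auto. destruct q; tauto. }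
    subst b'. exists (rmk q c); split.
    + unfold rall; apply in_flat_map; exists c; split; auto.
      unfold restr; rewrite E, Bool.eqb_reflx; simpl; auto.
    + apply cyl_mem_iff; intros p Hp. apply rmk_in in Hp; destruct Hp as [Hp Hq].
      rewrite <- (Hm p Hp). unfold upd. destruct (key_eq_dec (fst (fst p), snd (fst p)) q) as [e|]; auto.
      destruct (fst p); simpl in e; tauto.
  - exists c; split.
    + unfold rall; apply in_flat_map; exists c; split; auto.
      unfold restr; rewrite E; simpl; auto.
    + apply cyl_mem_iff; intros p Hp. rewrite <- (Hm p Hp). unfold upd.
      destruct (key_eq_dec (fst (fst p), snd (fst p)) q) as [e|]; auto.
      exfalso; apply (lookup_none q c p E Hp). destruct (fst p); simpl in e; auto.
Qed.

Lemma fin_cover_aux : forall n L, (tlen L <= n)%nat ->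
  (forall c, In c L -> NoDup (map fst c)) ->
  (forall w, exists c, In c L /\ cyl_mem c w) -> 1 <= lsum L.
Proof.
  induction n as [|n IH]; intros L Hl Hn Hc.
  - destruct (Hc (fun _ _ => true)) as [c [Hin _]].
    assert (c = nil).
    { destruct c; auto. exfalso. clear Hc Hn. induction L; simpl in *; [tauto|].
      destruct Hin as [->|H]; simpl in Hl; [lia|]. apply IHL; auto; lia. }
    subst c. pose proof (lsum_ge L nil Hin). unfold cyl_meas in H; simpl in H; lra.
  - destruct (find (fun c : cyl => match c with nil => false | _ => true end) L) as [c|] eqn:F.
    + destruct (find_some _ _ F) as [Hin Hne].
      destruct c as [|p c']; [discriminate|].
      assert (Hlk : lookup (fst p) (p :: c') <> None).
      { simpl. destruct (key_eq_dec (fst p) (fst p)); [discriminate|tauto]. }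
      pose proof (rall_tlen_lt (fst p) true L _ Hn Hin Hlk).
      pose proof (rall_tlen_lt (fst p) false L _ Hn Hin Hlk).
      pose proof (IH (rall (fst p) true L) ltac:(lia) (rall_nodup _ _ _ Hn) (rall_cover _ _ _ Hc)).
      pose proof (IH (rall (fst p) false L) ltac:(lia) (rall_nodup _ _ _ Hn) (rall_cover _ _ _ Hc)).
      pose proof (rall_meas (fst p) L Hn). lra.
    + destruct (Hc (fun _ _ => true)) as [c [Hin _]].
      pose proof (find_none _ _ F c Hin). destruct c; [|discriminate].
      pose proof (lsum_ge L nil Hin). unfold cyl_meas in H0; simpl in H0; lra.
Qed.

Definition qk (i : nat) : nat * nat := Cantor.of_nat i.

Definition agree (n : nat) (w g : Omega) : Prop :=
  forall i, (i < n)%nat -> w (fst (qk i)) (snd (qk i)) = g (fst (qk i)) (snd (qk i)).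

Section Compact.
Variable cs : nat -> list cyl.

Definition goodp (n : nat) (g : Omega) : Prop :=
  exists N, forall w, agree n w g -> exists m c, (m <= N)%nat /\ In c (cs m) /\ cyl_mem c w.

Lemma good_step n g : goodp (S n) (upd g (qk n) false) -> goodp (S n) (upd g (qk n) true) ->
  goodp n g.
Proof.
  intros [N1 H1] [N2 H2]. exists (Nat.max N1 N2). intros w Hw.
  assert (Ha : forall b, w (fst (qk n)) (snd (qk n)) = b -> agree (S n) w (upd g (qk n) b)).
  { intros b Hb i Hi. unfold upd.
    destruct (key_eq_dec (fst (qk i), snd (qk i)) (qk n)) as [e|ne].
    - rewrite <- Hb. destruct (qk i) as [x y]. simpl in e. rewrite e; reflexivity.
    - apply Hw. assert (i <> n). { intro; subst; destruct (qk n); simpl in ne; tauto. } lia. }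
  destruct (w (fst (qk n)) (snd (qk n))) eqn:E.
  - destruct (H2 w (Ha true eq_refl)) as [m [c [Hm Hc]]]. exists m, c; split; [lia|auto].
  - destruct (H1 w (Ha false eq_refl)) as [m [c [Hm Hc]]]. exists m, c; split; [lia|auto].
Qed.

Fixpoint gs (n : nat) : Omega :=
  match n with
  | O => fun _ _ => false
  | S m => if excluded_middle_informative (goodp (S m) (upd (gs m) (qk m) false))
           then upd (gs m) (qk m) true else upd (gs m) (qk m) false
  end.

Lemma gs_bad (H0 : ~ goodp 0 (gs 0)) : forall n, ~ goodp n (gs n).
Proof.
  induction n as [|n IH]; auto. simpl.
  destruct (excluded_middle_informative (goodp (S n) (upd (gs n) (qk n) false))) as [G|G]; auto.
  intro G2; apply IH; apply good_step; auto.
Qed.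

Lemma qk_inj i j : qk i = qk j -> i = j.
Proof. intro H. rewrite <- (cancel_to_of i), <- (cancel_to_of j). unfold qk in H; rewrite H; auto. Qed.

Lemma gs_stable i : forall n, (i < n)%nat ->
  gs n (fst (qk i)) (snd (qk i)) = gs (S i) (fst (qk i)) (snd (qk i)).
Proof.
  induction n as [|n IH]; intros Hi; [lia|].
  destruct (Nat.eq_dec i n) as [->|ne]; auto.
  rewrite <- IH by lia. simpl.
  assert (Hq : (fst (qk i), snd (qk i)) <> qk n).
  { intro e; apply ne, qk_inj. rewrite <- e; destruct (qk i); auto. }
  destruct (excluded_middle_informative _); unfold upd;
   destruct (key_eq_dec (fst (qk i), snd (qk i)) (qk n)); tauto.
Qed.

Fixpoint maxkey (c : cyl) : nat :=
  match c with nil => 0%nat | p :: c' => Nat.max (to_nat (fst p)) (maxkey c') end.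

Lemma maxkey_ge c p : In p c -> (to_nat (fst p) <= maxkey c)%nat.
Proof. induction c as [|p' c IH]; simpl; [tauto|]. intros [->|H]; [lia|]. specialize (IH H); lia. Qed.

Lemma compact_cover :
  (forall w, exists m c, In c (cs m) /\ cyl_mem c w) ->
  exists N, forall w, exists m c, (m <= N)%nat /\ In c (cs m) /\ cyl_mem c w.
Proof.
  intros Hcov. apply NNPP; intro Hno.
  assert (H0 : ~ goodp 0 (gs 0)).
  { intros [N HN]. apply Hno. exists N. intros w; apply HN. intros i Hi; lia. }
  pose (ws := fun k j => gs (S (to_nat (k, j))) k j).
  destruct (Hcov ws) as [m [c [Hin Hm]]].
  apply (gs_bad H0 (S (maxkey c))). exists m. intros w Hw. exists m, c; split; [lia|split; auto].
  rewrite cyl_mem_iff in *. intros p Hp. rewrite <- (Hm p Hp).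
  pose proof (maxkey_ge c p Hp).
  set (i := to_nat (fst p)) in *.
  assert (Hqi : qk i = fst p) by (unfold qk, i; apply cancel_of_to).
  unfold ws. specialize (Hw i ltac:(lia)). rewrite Hqi in Hw. rewrite Hw.
  rewrite <- Hqi at 1 2. rewrite gs_stable by lia. rewrite Hqi.
  destruct (fst p) as [k j]; simpl. fold i. unfold i. simpl. reflexivity.
Qed.
End Compact.

Definition ol (o : option cyl) : list cyl := match o with None => [] | Some c => [c] end.
Definition term (cs : nat -> option cyl) (n : nat) : R :=
  match cs n with Some c => cyl_meas c | None => 0 end.

Lemma lsum_ol o : lsum (ol o) = match o with Some c => cyl_meas c | None => 0 end.
Proof. destruct o; simpl; lra. Qed.

Lemma term_nonneg cs n : 0 <= term cs n.
Proof. unfold term; destruct (cs n); [pose proof (cyl_meas_pos c)|]; lra. Qed.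

Lemma partial_le cs s : infinite_sum (term cs) s -> forall N, sum_f_R0 (term cs) N <= s.
Proof.
  intros H N. apply growing_ineq; [|exact H].
  intro n; simpl; pose proof (term_nonneg cs (S n)); lra.
Qed.

Lemma two_covers A B s1 s2 : cover_sum A s1 -> cover_sum B s2 ->
  (forall w, A w \/ B w) -> 1 <= s1 + s2.
Proof.
  intros [cs1 [N1 [C1 S1]]] [cs2 [N2 [C2 S2]]] HAB.
  pose (cs := fun n => ol (cs1 n) ++ ol (cs2 n)).
  assert (Hc : forall w, exists m c, In c (cs m) /\ cyl_mem c w).
  { intro w; destruct (HAB w) as [Ha|Hb].
    - destruct (C1 w Ha) as [n [c [E M]]]. exists n, c; split; auto.
      unfold cs; rewrite E; simpl; auto.
    - destruct (C2 w Hb) as [n [c [E M]]]. exists n, c; split; auto.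
      unfold cs; rewrite E; apply in_or_app; right; simpl; auto. }
  destruct (compact_cover cs Hc) as [N HN].
  pose (L := flat_map cs (seq 0 (S N))).
  assert (HL : 1 <= lsum L).
  { apply (fin_cover_aux (tlen L)); auto.
    - intros c Hin. unfold L in Hin; apply in_flat_map in Hin.
      destruct Hin as [m [_ Hm]]. unfold cs in Hm; apply in_app_or in Hm.
      destruct Hm as [Hm|Hm].
      + destruct (cs1 m) eqn:E; simpl in Hm; [|tauto]. destruct Hm as [<-|[]]; eauto.
      + destruct (cs2 m) eqn:E; simpl in Hm; [|tauto]. destruct Hm as [<-|[]]; eauto.
    - intro w. destruct (HN w) as [m [c [Hm [Hin Hmem]]]]. exists c; split; auto.
      unfold L; apply in_flat_map. exists m; split; auto. apply in_seq; lia. }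
  assert (Heq : forall N, lsum (flat_map cs (seq 0 (S N))) =
                 sum_f_R0 (term cs1) N + sum_f_R0 (term cs2) N).
  { induction N0 as [|N0 IH].
    - simpl. rewrite app_nil_r. unfold cs. rewrite lsum_app, !lsum_ol. unfold term; reflexivity.
    - rewrite seq_S, flat_map_app, lsum_app, IH. simpl. rewrite app_nil_r.
      unfold cs. rewrite lsum_app, !lsum_ol. unfold term. lra. }
  unfold L in HL; rewrite Heq in HL.
  pose proof (partial_le cs1 s1 S1 N). pose proof (partial_le cs2 s2 S2 N). lra.
Qed.

Lemma sum_zero n : sum_f_R0 (fun _ => 0) n = 0.
Proof. induction n; simpl; lra. Qed.

Lemma list_sum_eq L : forall n, (length L <= S n)%nat ->
  sum_f_R0 (term (fun k => nth_error L k)) n = lsum L.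
Proof.
  induction L as [|c L IH]; intros n Hn.
  - simpl. unfold term. transitivity (sum_f_R0 (fun _ => 0) n); [|apply sum_zero].
    apply sum_eq; intros i _. destruct i; reflexivity.
  - destruct n as [|n].
    + simpl in Hn. destruct L; [|simpl in Hn; lia]. simpl; unfold term; simpl; lra.
    + rewrite decomp_sum by lia. simpl pred. rewrite IH by (simpl in Hn; lia).
      unfold term at 1; simpl. reflexivity.
Qed.

Lemma list_cover_sum (A : Omega -> Prop) L :
  (forall c, In c L -> NoDup (map fst c)) ->
  (forall w, A w -> exists c, In c L /\ cyl_mem c w) -> cover_sum A (lsum L).
Proof.
  intros Hn Hc. exists (fun k => nth_error L k). split; [|split].
  - intros n c E. apply Hn. eapply nth_error_In; eauto.
  - intros w Hw. destruct (Hc w Hw) as [c [Hin Hm]].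
    destruct (In_nth_error _ _ Hin) as [n E]. exists n, c; auto.
  - intros eps He. exists (length L). intros n Hln.
    assert (Hl2 : (length L <= S n)%nat) by lia. pose proof (list_sum_eq L n Hl2) as E; unfold term in E. assert (HH : Rdist (lsum L) (lsum L) < eps) by (unfold Rdist; rewrite Rminus_diag, Rabs_R0; lra). rewrite <- E in HH at 1. exact HH.
Qed.

Lemma prob_assemble A L :
  (forall eps, 0 < eps -> exists s, cover_sum A s /\ s <= L + eps) ->
  (forall eps, 0 < eps -> exists s, cover_sum (fun w => ~ A w) s /\ s <= 1 - L + eps) ->
  prob_is A L.
Proof.
  intros U1 U2.
  assert (Tot : forall s1 s2, cover_sum A s1 -> cover_sum (fun w => ~ A w) s2 -> 1 <= s1 + s2).
  { intros s1 s2 H1 H2. apply (two_covers A (fun w => ~ A w)); auto. intro w; apply classic. }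
  split; split.
  - intros s Hs. apply Rnot_lt_le; intro Hlt.
    destruct (U2 ((L - s)/2) ltac:(lra)) as [s2 [H2 Hle]].
    pose proof (Tot _ _ Hs H2); lra.
  - intros y Hy. apply Rnot_lt_le; intro Hlt.
    destruct (U1 ((y - L)/2) ltac:(lra)) as [s [H1 Hle]].
    pose proof (Hy s H1); lra.
  - intros s Hs. apply Rnot_lt_le; intro Hlt.
    destruct (U1 ((1 - L - s)/2) ltac:(lra)) as [s1 [H1 Hle]].
    pose proof (Tot _ _ H1 Hs); lra.
  - intros y Hy. apply Rnot_lt_le; intro Hlt.
    destruct (U2 ((y - (1 - L))/2) ltac:(lra)) as [s [H1 Hle]].
    pose proof (Hy s H1); lra.
Qed.

Definition inb (a b x : R) : bool :=
  if Rle_dec a x then (if Rle_dec x b then true else false) else false.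

Lemma count_bound a b K :
  INR (length (filter (fun i => inb a b (INR i)) (seq 0 K))) <= Rmax 0 (Rmin b (INR K - 1) - a + 1).
Proof.
  induction K as [|K IH].
  - simpl. apply Rmax_l.
  - rewrite seq_S, filter_app, length_app. simpl filter. rewrite plus_INR, S_INR.
    set (c := INR (length (filter (fun i => inb a b (INR i)) (seq 0 K)))) in *.
    assert (Hm1 : Rmin b (INR K - 1) <= Rmin b (INR K + 1 - 1)).
    { unfold Rmin; destruct (Rle_dec b (INR K - 1)); destruct (Rle_dec b (INR K + 1 - 1)); lra. }
    assert (Hmono : forall x y, x <= y -> Rmax 0 x <= Rmax 0 y).
    { intros x y Hxy; unfold Rmax; destruct (Rle_dec 0 x); destruct (Rle_dec 0 y); lra. }
    unfold inb.
    destruct (Rle_dec a (INR K)) as [h1|h1]; [destruct (Rle_dec (INR K) b) as [h2|h2]|];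
      simpl length; simpl INR.
    + assert (E1 : Rmin b (INR K + 1 - 1) = INR K) by (unfold Rmin; destruct (Rle_dec b (INR K + 1 - 1)); lra).
      rewrite E1.
      assert (c <= INR K - a).
      { eapply Rle_trans; [exact IH|]. unfold Rmax, Rmin.
        destruct (Rle_dec b (INR K - 1)); destruct (Rle_dec 0 _); lra. }
      unfold Rmax; destruct (Rle_dec 0 _); lra.
    + assert (Rmax 0 (Rmin b (INR K - 1) - a + 1) <= Rmax 0 (Rmin b (INR K + 1 - 1) - a + 1)) by (apply Hmono; lra).
      change (INR 0) with 0. lra.
    + assert (Rmax 0 (Rmin b (INR K - 1) - a + 1) <= Rmax 0 (Rmin b (INR K + 1 - 1) - a + 1)) by (apply Hmono; lra).
      change (INR 0) with 0. lra.
Qed.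

Lemma filter_or_len {A} (P Q : A -> bool) l :
  (length (filter (fun x => orb (P x) (Q x)) l) <= length (filter P l) + length (filter Q l))%nat.
Proof.
  induction l as [|x l IH]; simpl; [lia|].
  destruct (P x), (Q x); simpl; lia.
Qed.

Section Bits.
Variable key : nat -> nat * nat.
Hypothesis key_fst : forall k, fst (key k) = k.
Variable sgn : nat -> bool.

Definition bit (k : nat) (w : Omega) : bool := Bool.eqb (w (fst (key k)) (snd (key k))) (sgn k).
Definition epsb (k : nat) (w : Omega) : R := if bit k w then 1 else -1.

Fixpoint idx (M : nat) (w : Omega) : nat :=
  match M with O => O | S m => (2 * idx m w + (if bit (S m) w then 1 else 0))%nat end.

Definition Thp (M : nat) (w : Omega) : R := rsum1 M (fun k => epsb k w * (/2) ^ k).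

Lemma idx_S M w : idx (S M) w = (2 * idx M w + (if bit (S M) w then 1 else 0))%nat.
Proof. reflexivity. Qed.

Lemma Thp_idx M w : Thp M w = -1 + (2 * INR (idx M w) + 1) * (/2) ^ M.
Proof.
  induction M as [|M IH]; unfold Thp in *; simpl rsum1.
  - simpl; lra.
  - rewrite idx_S, IH. unfold epsb. rewrite plus_INR, mult_INR. simpl pow.
    destruct (bit (S M) w); simpl INR; field.
Qed.

Lemma idx_lt M w : (idx M w < 2 ^ M)%nat.
Proof. induction M; simpl; [lia|]. destruct (bit (S M) w); lia. Qed.

Fixpoint cylM (M : nat) (i : nat) : cyl :=
  match M with
  | O => []
  | S m => (key (S m), Bool.eqb (Nat.odd i) (sgn (S m))) :: cylM m (Nat.div2 i)
  end.

Lemma cylM_len M i : length (cylM M i) = M.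
Proof. revert i; induction M; intros; simpl; auto. Qed.

Lemma cylM_keys M i p : In p (cylM M i) -> (1 <= fst (fst p) <= M)%nat.
Proof.
  revert i; induction M as [|M IH]; intros i; simpl; [tauto|].
  intros [<-|H]; [simpl; rewrite key_fst; lia|]. specialize (IH _ H); lia.
Qed.

Lemma cylM_nodup M i : NoDup (map fst (cylM M i)).
Proof.
  revert i; induction M as [|M IH]; intros i; simpl; [constructor|].
  constructor; auto. intro Hin. apply in_map_iff in Hin. destruct Hin as [p [Hp Hin]].
  apply cylM_keys in Hin. rewrite Hp, key_fst in Hin. lia.
Qed.

Lemma eqb_swap (a b c : bool) : Bool.eqb a b = c -> a = Bool.eqb c b.
Proof. destruct a, b, c; simpl; auto; discriminate. Qed.

Lemma odd_step (m : nat) (b : bool) : Nat.odd (2 * m + (if b then 1 else 0))%nat = b.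
Proof.
  destruct b.
  - rewrite Nat.odd_add, Nat.odd_mul. simpl. destruct (Nat.odd m); reflexivity.
  - rewrite Nat.add_0_r, Nat.odd_mul; reflexivity.
Qed.

Lemma div2_step (m : nat) (b : bool) : Nat.div2 (2 * m + (if b then 1 else 0))%nat = m.
Proof.
  destruct b.
  - replace (2 * m + 1)%nat with (S (2 * m)) by lia. apply Nat.div2_succ_double.
  - rewrite Nat.add_0_r. apply Nat.div2_double.
Qed.

Lemma cylM_mem M w : cyl_mem (cylM M (idx M w)) w.
Proof.
  induction M as [|M IH]; [constructor|].
  rewrite idx_S. constructor.
  - change (w (fst (key (S M))) (snd (key (S M))) = Bool.eqb (Nat.odd (2 * idx M w + (if bit (S M) w then 1 else 0))%nat) (sgn (S M))). rewrite odd_step. unfold bit. destruct (w (fst (key (S M))) (snd (key (S M)))), (sgn (S M)); reflexivity.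
  - rewrite div2_step. exact IH.
Qed.

Lemma cylM_mem_idx M : forall i w, (i < 2 ^ M)%nat -> cyl_mem (cylM M i) w -> idx M w = i.
Proof.
  induction M as [|M IH]; intros i w Hi Hm; simpl in *; [lia|].
  inversion Hm; subst. simpl in H1.
  assert (Hd : (Nat.div2 i < 2 ^ M)%nat).
  { pose proof (Nat.div2_odd i). destruct (Nat.odd i); simpl in H; lia. }
  rewrite (IH _ _ Hd H2).
  assert (Hb : bit (S M) w = Nat.odd i).
  { unfold bit. rewrite H1. destruct (Nat.odd i), (sgn (S M)); reflexivity. }
  rewrite Hb. pose proof (Nat.div2_odd i). destruct (Nat.odd i); simpl in *; lia.
Qed.

End Bits.

Lemma inb_true a b x : a <= x <= b -> inb a b x = true.
Proof. intros [h1 h2]; unfold inb; destruct (Rle_dec a x); destruct (Rle_dec x b); auto; lra. Qed.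

Lemma abs_le_inv x e : Rabs x <= e -> -e <= x <= e.
Proof. unfold Rabs; destruct (Rcase_abs x); lra. Qed.

Lemma small_pow eps : 0 < eps -> exists M, (/2) ^ M < eps.
Proof.
  intros He. destruct (pow_lt_1_zero (/2) ltac:(rewrite Rabs_pos_eq; lra) eps He) as [N HN].
  exists N. specialize (HN N (le_n N)). rewrite Rabs_pos_eq in HN; auto.
  apply pow_le; lra.
Qed.

Lemma pow_half M : 2 ^ M * (/2) ^ M = 1.
Proof. rewrite <- Rpow_mult_distr. replace (2 * /2) with 1 by field. apply pow1. Qed.

Section Prob.
Variable key : nat -> nat * nat.
Hypothesis key_fst : forall k, fst (key k) = k.
Variable sgn : nat -> bool.
Variable Th : Omega -> R.
Hypothesis Th_approx : forall M w, Rabs (Th w - Thp key sgn M w) <= (/2) ^ M.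

Lemma lsum_cylM M l : lsum (map (cylM key sgn M) l) = INR (length l) * (/2) ^ M.
Proof.
  induction l as [|i l IH]; simpl map; simpl lsum; [simpl; lra|].
  rewrite IH. unfold cyl_meas. rewrite cylM_len. simpl length. rewrite S_INR; lra.
Qed.

Lemma map_nodup M l : forall c, In c (map (cylM key sgn M) l) -> NoDup (map fst c).
Proof. intros c Hc. apply in_map_iff in Hc. destruct Hc as [i [<- _]]. apply cylM_nodup; auto. Qed.

Lemma approx_idx M w :
  -1 + 2 * INR (idx key sgn M w) * (/2)^M <= Th w <= -1 + 2 * (INR (idx key sgn M w) + 1) * (/2)^M.
Proof.
  pose proof (Th_approx M w). rewrite Thp_idx in H. apply abs_le_inv in H. lra.
Qed.

Lemma U1 lo hi : lo <= hi -> forall eps, 0 < eps ->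
  exists s, cover_sum (fun w => lo <= Th w <= hi) s /\ s <= (hi - lo) / 2 + eps.
Proof.
  intros Hlh eps He. destruct (small_pow (eps/2) ltac:(lra)) as [M HM].
  set (h := (/2)^M) in *. set (P := 2 ^ M).
  assert (HPh : P * h = 1) by apply pow_half.
  assert (Hh : 0 < h) by (apply pow_lt; lra).
  assert (HP : 0 < P) by (apply pow_lt; lra).
  set (a := (lo + 1) * P / 2 - 1). set (b := (hi + 1) * P / 2).
  set (l := filter (fun i => inb a b (INR i)) (seq 0 (2 ^ M))).
  exists (lsum (map (cylM key sgn M) l)). split.
  - apply list_cover_sum; [apply map_nodup|].
    intros w Hw. exists (cylM key sgn M (idx key sgn M w)). split; [|apply cylM_mem; auto].
    apply in_map. unfold l; apply filter_In; split; [apply in_seq; pose proof (idx_lt key sgn M w); lia|].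
    apply inb_true. pose proof (approx_idx M w). fold h in H.
    set (i := INR (idx key sgn M w)) in *.
    assert (E1 : i = i * (P * h)) by (rewrite HPh; ring).
    split; unfold a, b.
    + assert ((lo + 1) * P / 2 <= (i + 1) * (P * h)).
      { replace ((i + 1) * (P * h)) with ((2 * (i + 1) * h) * P / 2) by field.
        apply Rmult_le_compat_r; [lra|]. apply Rmult_le_compat_r; lra. }
      rewrite HPh in H0; lra.
    + assert (i * (P * h) <= (hi + 1) * P / 2).
      { replace (i * (P * h)) with ((2 * i * h) * P / 2) by field.
        apply Rmult_le_compat_r; [lra|]. apply Rmult_le_compat_r; lra. }
      lra.
  - rewrite lsum_cylM. fold h. pose proof (count_bound a b (2 ^ M)). fold l in H.
    assert (Rmax 0 (Rmin b (INR (2 ^ M) - 1) - a + 1) <= b - a + 1).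
    { assert (0 <= (hi - lo) * P) by (apply Rmult_le_pos; lra).
      unfold Rmax, Rmin; destruct (Rle_dec b _); destruct (Rle_dec 0 _); unfold a, b in *; lra. }
    assert (INR (length l) * h <= (b - a + 1) * h) by (apply Rmult_le_compat_r; lra).
    assert ((b - a + 1) * h = (hi - lo)/2 + 2 * h).
    { unfold a, b. replace ((hi + 1) * P / 2 - ((lo + 1) * P / 2 - 1) + 1) with ((hi - lo) * P / 2 + 2) by field.
      replace (((hi - lo) * P / 2 + 2) * h) with ((hi - lo) * (P * h) / 2 + 2 * h) by field.
      rewrite HPh; field. }
    lra.
Qed.

Lemma U2 lo hi : -1 <= lo -> hi <= 1 -> forall eps, 0 < eps ->
  exists s, cover_sum (fun w => Th w <= lo \/ hi <= Th w) s /\ s <= 1 - (hi - lo) / 2 + eps.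
Proof.
  intros Hlo Hhi eps He. destruct (small_pow (eps/2) ltac:(lra)) as [M HM].
  set (h := (/2)^M) in *. set (P := 2 ^ M).
  assert (HPh : P * h = 1) by apply pow_half.
  assert (Hh : 0 < h) by (apply pow_lt; lra).
  assert (HP : 0 < P) by (apply pow_lt; lra).
  assert (HPn : INR (2 ^ M) = P) by (unfold P; rewrite pow_INR; simpl; f_equal; lra).
  set (b := (lo + 1) * P / 2). set (a := (hi + 1) * P / 2 - 1).
  set (l := filter (fun i => orb (inb 0 b (INR i)) (inb a P (INR i))) (seq 0 (2 ^ M))).
  exists (lsum (map (cylM key sgn M) l)). split.
  - apply list_cover_sum; [apply map_nodup|].
    intros w Hw. exists (cylM key sgn M (idx key sgn M w)). split; [|apply cylM_mem; auto].
    apply in_map. unfold l; apply filter_In. pose proof (idx_lt key sgn M w).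
    split; [apply in_seq; lia|].
    pose proof (approx_idx M w). fold h in H0.
    assert (Hi0 : 0 <= INR (idx key sgn M w)) by apply pos_INR.
    assert (HiP : INR (idx key sgn M w) <= P) by (rewrite <- HPn; apply le_INR; lia).
    set (i := INR (idx key sgn M w)) in *.
    destruct Hw as [Hw|Hw].
    + rewrite inb_true; [reflexivity|]. split; auto. unfold b.
      assert (i * (P * h) <= (lo + 1) * P / 2).
      { replace (i * (P * h)) with ((2 * i * h) * P / 2) by field.
        apply Rmult_le_compat_r; [lra|]. apply Rmult_le_compat_r; lra. }
      rewrite HPh in H1; lra.
    + rewrite (inb_true a P i); [apply Bool.orb_true_r|]. split; auto. unfold a.
      assert ((hi + 1) * P / 2 <= (i + 1) * (P * h)).
      { replace ((i + 1) * (P * h)) with ((2 * (i + 1) * h) * P / 2) by field.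
        apply Rmult_le_compat_r; [lra|]. apply Rmult_le_compat_r; lra. }
      rewrite HPh in H1; lra.
  - rewrite lsum_cylM. fold h.
    pose proof (filter_or_len (fun i => inb 0 b (INR i)) (fun i => inb a P (INR i)) (seq 0 (2 ^ M))).
    cbv beta in H. fold l in H. apply le_INR in H. rewrite plus_INR in H.
    pose proof (count_bound 0 b (2 ^ M)). pose proof (count_bound a P (2 ^ M)).
    rewrite HPn in H0, H1.
    assert (Rmax 0 (Rmin b (P - 1) - 0 + 1) <= b + 1).
    { assert (0 <= (lo + 1) * P) by (apply Rmult_le_pos; lra).
      unfold Rmax, Rmin; destruct (Rle_dec b _); destruct (Rle_dec 0 _); unfold b in *; lra. }
    assert (Rmax 0 (Rmin P (P - 1) - a + 1) <= P - a).
    { assert (0 <= (1 - hi) * P) by (apply Rmult_le_pos; lra).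
      unfold Rmax, Rmin; destruct (Rle_dec P _); destruct (Rle_dec 0 _); unfold a in *; lra. }
    assert (INR (length l) * h <= (b + 1 + (P - a)) * h) by (apply Rmult_le_compat_r; lra).
    assert ((b + 1 + (P - a)) * h = 1 - (hi - lo)/2 + 2 * h).
    { unfold a, b.
      replace (((lo + 1) * P / 2 + 1 + (P - ((hi + 1) * P / 2 - 1))) * h) with
        ((lo + 1) * (P * h) / 2 + (P * h) - (hi + 1) * (P * h) / 2 + 2 * h) by field.
      rewrite HPh; field. }
    lra.
Qed.

Lemma prob_interval (A : Omega -> Prop) lo hi : -1 <= lo -> lo <= hi -> hi <= 1 ->
  (forall w, A w -> lo <= Th w <= hi) ->
  (forall w, ~ A w -> Th w <= lo \/ hi <= Th w) ->
  prob_is A ((hi - lo) / 2).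
Proof.
  intros H1 H2 H3 HA HnA. apply prob_assemble.
  - intros eps He. destruct (U1 lo hi H2 eps He) as [s [Hs Hle]]. exists s; split; auto.
    destruct Hs as [cs [C1 [C2 C3]]]. exists cs; split; [|split]; auto.
  - intros eps He. destruct (U2 lo hi H1 H3 eps He) as [s [Hs Hle]]. exists s; split; [|lra].
    destruct Hs as [cs [C1 [C2 C3]]]. exists cs; split; [|split]; auto.
Qed.
End Prob.

Definition yk (n : nat) : R := (/2) ^ n.

Lemma yk_pos n : 0 < yk n.
Proof. apply pow_lt; lra. Qed.

Lemma yk_le1 n : yk n <= 1.
Proof. unfold yk; induction n; simpl; lra. Qed.

Lemma yk_S n : yk n = 2 * yk (S n).
Proof. unfold yk; simpl; field. Qed.

Lemma sin_yk_pos n : 0 < sin (yk n).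
Proof. apply sin_gt_0; [apply yk_pos|]. pose proof (yk_le1 n); pose proof PI2_1; lra. Qed.

Lemma cos_yk_pos n : 0 < cos (yk n).
Proof. apply cos_gt_0; pose proof (yk_pos n); pose proof (yk_le1 n); pose proof PI2_1; lra. Qed.

Lemma cseq_S n : cseq (S n) = cseq n / cos (yk (S n)) ^ 2.
Proof. unfold yk; rewrite pow_inv; reflexivity. Qed.

Lemma cseq_closed n : cseq n = (2 ^ n * sin (yk n)) ^ 2.
Proof.
  induction n as [|n IH].
  - simpl. unfold yk; simpl. ring.
  - rewrite cseq_S, IH.
    rewrite (yk_S n), sin_2a. pose proof (cos_yk_pos (S n)). simpl. field. lra.
Qed.

Lemma cseq_pos n : 0 < cseq n.
Proof. rewrite cseq_closed. pose proof (sin_yk_pos n). pose proof (pow_lt 2 n ltac:(lra)).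
  apply pow_lt. nra. Qed.

Lemma sqrt_ratio n : sqrt (cseq n / cseq 0) = 2 ^ n * sin (yk n) / sin 1.
Proof.
  rewrite !cseq_closed. pose proof (sin_yk_pos n). pose proof (pow_lt 2 n ltac:(lra)).
  assert (sin 1 > 0) by (apply sin_gt_0; pose proof PI2_1; lra).
  replace ((2 ^ n * sin (yk n)) ^ 2 / (2 ^ 0 * sin (yk 0)) ^ 2) with ((2 ^ n * sin (yk n) / sin 1) ^ 2).
  - apply sqrt_pow2. apply Rmult_le_pos; [nra|]. left; apply Rinv_0_lt_compat; lra.
  - unfold yk; simpl. field. lra.
Qed.

Lemma theta_val k : (1 <= k)%nat -> theta k = yk k.
Proof.
  intros Hk. destruct k as [|m]; [lia|]. unfold theta. simpl pred.
  assert (E : cseq m = cseq (S m) * cos (yk (S m)) ^ 2).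
  { rewrite cseq_S. pose proof (cos_yk_pos (S m)). field. lra. }
  pose proof (cseq_pos (S m)).
  replace ((cseq (S m) - cseq m) / cseq (S m)) with (sin (yk (S m)) ^ 2).
  - rewrite sqrt_pow2 by (left; apply sin_yk_pos). apply asin_sin.
    pose proof (yk_pos (S m)); pose proof (yk_le1 (S m)); pose proof PI2_1; lra.
  - rewrite E. pose proof (sin2_cos2 (yk (S m))). unfold Rsqr in H0.
    replace ((cseq (S m) - cseq (S m) * cos (yk (S m)) ^ 2) / cseq (S m)) with (1 - cos (yk (S m))^2)
      by (field; lra).
    simpl. lra.
Qed.

Lemma yk_cv : Un_cv yk 0.
Proof.
  intros eps He. destruct (pow_lt_1_zero (/2) ltac:(rewrite Rabs_pos_eq; lra) eps He) as [N HN].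
  exists N. intros n Hn. unfold Rdist, yk. rewrite Rminus_0_r. apply HN; lia.
Qed.

Lemma sinc_cv : Un_cv (fun n => 2 ^ n * sin (yk n)) 1.
Proof.
  intros eps He. pose proof (derivable_pt_lim_sin 0) as D. rewrite cos_0 in D.
  destruct (D eps He) as [del Hdel].
  destruct (yk_cv del (cond_pos del)) as [N HN]. exists N. intros n Hn.
  specialize (HN n Hn). unfold Rdist in HN. rewrite Rminus_0_r, Rabs_pos_eq in HN by (left; apply yk_pos).
  specialize (Hdel (yk n) (Rgt_not_eq _ _ (yk_pos n))).
  rewrite Rabs_pos_eq in Hdel by (left; apply yk_pos). specialize (Hdel HN).
  rewrite Rplus_0_l, sin_0, Rminus_0_r in Hdel. unfold Rdist.
  replace (2 ^ n * sin (yk n)) with (sin (yk n) / yk n); auto.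
  unfold yk. rewrite pow_inv. field. apply pow_nonzero; lra.
Qed.

Lemma floor_spec y : IZR (floorR y) <= y < IZR (floorR y) + 1.
Proof. unfold floorR. pose proof (base_Int_part y). lra. Qed.

Lemma floor_ge z y : IZR z <= y -> (z <= floorR y)%Z.
Proof.
  intros H. pose proof (floor_spec y). destruct (Z_le_gt_dec z (floorR y)) as [h|h]; auto.
  exfalso. assert (IZR (floorR y) + 1 <= IZR z).
  { rewrite <- plus_IZR. apply IZR_le. lia. }
  lra.
Qed.

Lemma floor_iff z y : IZR z <= y <-> (z <= floorR y)%Z.
Proof.
  split; [apply floor_ge|]. intros H. apply IZR_le in H. pose proof (floor_spec y); lra.
Qed.

Lemma floor_unique z y : IZR z <= y < IZR z + 1 -> floorR y = z.
Proof.
  intros [h1 h2]. apply floor_ge in h1. pose proof (floor_spec y).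
  destruct (Z.eq_dec (floorR y) z) as [e|ne]; auto. exfalso.
  assert (IZR (z + 1) <= IZR (floorR y)) by (apply IZR_le; lia).
  rewrite plus_IZR in H0. lra.
Qed.

Lemma rsum1_ext n f g : (forall k, (1 <= k <= n)%nat -> f k = g k) -> rsum1 n f = rsum1 n g.
Proof.
  induction n as [|n IH]; intros H; simpl; auto.
  rewrite IH by (intros; apply H; lia). rewrite H by lia. auto.
Qed.

Lemma rsum1_zero n : rsum1 n (fun _ => 0) = 0.
Proof. induction n; simpl; lra. Qed.

Lemma rsum1_S n f : rsum1 (S n) f = rsum1 n f + f (S n).
Proof. reflexivity. Qed.

Lemma rsum1_single n m c : (1 <= m <= n)%nat ->
  rsum1 n (fun j => if Nat.eqb j m then c else 0) = c.
Proof.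
  induction n as [|n IH]; intros Hm; [lia|]. rewrite rsum1_S.
  destruct (Nat.eq_dec m (S n)) as [->|ne].
  - rewrite Nat.eqb_refl. rewrite (rsum1_ext n _ (fun _ => 0)); [rewrite rsum1_zero; lra|].
    intros k Hk. destruct (Nat.eqb_spec k (S n)); [lia|auto].
  - rewrite IH by lia. destruct (Nat.eqb_spec (S n) m); [lia|lra].
Qed.

Definition jk (k : nat) (x : R) : nat := S (Z.to_nat (floorR (2 ^ (k - 1) * x))).

Lemma div_le_iff u P x : 0 < P -> (u / P <= x <-> u <= P * x).
Proof.
  intros HP; split; intros H.
  - apply Rmult_le_compat_l with (r := P) in H; [|lra]. field_simplify in H; lra.
  - replace x with ((P * x) / P) by (field; lra). unfold Rdiv. apply Rmult_le_compat_r; auto.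
    left; apply Rinv_0_lt_compat; auto.
Qed.

Lemma INR_pow2 n : INR (2 ^ n) = 2 ^ n.
Proof. rewrite pow_INR. reflexivity. Qed.

Lemma jk_bounds k x : 0 <= x < 1 -> (1 <= jk k x <= 2 ^ (k - 1))%nat.
Proof.
  intros Hx. unfold jk. set (P := 2 ^ (k - 1)).
  assert (HP : 0 < P) by (apply pow_lt; lra).
  pose proof (floor_spec (P * x)).
  assert (h1 : (0 <= floorR (P * x))%Z) by (apply floor_ge; simpl; nra).
  assert (h2 : IZR (floorR (P * x)) < IZR (Z.of_nat (2 ^ (k - 1)))).
  { rewrite <- INR_IZR_INZ, INR_pow2. fold P. nra. }
  apply lt_IZR in h2. lia.
Qed.

Lemma indI_char k j x : (1 <= k)%nat -> 0 <= x < 1 -> (1 <= j <= 2 ^ (k - 1))%nat ->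
  indI k j x = if Nat.eqb j (jk k x) then 1 else 0.
Proof.
  intros Hk Hx Hj. unfold indI, jk. cbv zeta.
  set (P := 2 ^ (k - 1)).
  assert (HP : 0 < P) by (apply pow_lt; lra).
  set (f := floorR (P * x)).
  assert (h1 : (0 <= f)%Z) by (apply floor_ge; simpl; nra).
  assert (h2 : IZR f < IZR (Z.of_nat (2 ^ (k - 1)))).
  { rewrite <- INR_IZR_INZ, INR_pow2. fold P. pose proof (floor_spec (P * x)). fold f in H. nra. }
  apply lt_IZR in h2.
  assert (Ea : (INR (j - 1) / P <= x) <-> (Z.of_nat (j - 1) <= f)%Z).
  { rewrite div_le_iff by auto. rewrite INR_IZR_INZ. apply floor_iff. }
  assert (Eb : (x < INR j / P) <-> ~ (Z.of_nat j <= f)%Z).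
  { unfold f. rewrite <- floor_iff, <- INR_IZR_INZ. rewrite <- (div_le_iff _ P x HP). split; lra. }
  destruct (Nat.eqb_spec j (S (Z.to_nat f))) as [e|ne];
  destruct (Nat.eqb_spec j (2 ^ (k - 1))) as [e2|ne2];
  destruct (Rle_dec (INR (j - 1) / P) x) as [r1|r1];
  try destruct (Rle_dec x 1) as [r2|r2];
  try destruct (Rlt_dec x (INR j / P)) as [r3|r3];
  try rewrite Ea in r1; try rewrite Eb in r3; try lra; try lia.
Qed.

Definition radsgn (x : R) (k : nat) : bool := if Req_EM_T (rademacher k x) 1 then true else false.
Definition keyx (x : R) (k : nat) : nat * nat := (k, jk k x).

Lemma rad_cases k x : rademacher k x = 1 \/ rademacher k x = -1.
Proof. unfold rademacher. destruct (Rlt_dec x 1); [destruct (Z.even _)|]; auto. Qed.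

Lemma epsb_rad x k w : epsb (keyx x) (radsgn x) k w = rademacher k x * dcoord k (jk k x) w.
Proof.
  unfold epsb, bit, radsgn, keyx, dcoord; simpl.
  destruct (rad_cases k x) as [E|E]; rewrite E;
  destruct (Req_EM_T (-1) 1); destruct (Req_EM_T 1 1); try lra;
  destruct (w k (jk k x)); simpl; lra.
Qed.

Lemma Theta_rep x w n : 0 <= x < 1 -> Theta n x w = Thp (keyx x) (radsgn x) n w.
Proof.
  intros Hx. unfold Theta, Thp. apply rsum1_ext. intros k Hk.
  rewrite epsb_rad, <- theta_val by lia. unfold yk.
  rewrite (rsum1_ext _ _ (fun j => if Nat.eqb j (jk k x) then
      rademacher k x * dcoord k (jk k x) w * theta k else 0)).
  - apply rsum1_single. apply jk_bounds; auto.
  - intros j Hj. rewrite indI_char by (auto; lia).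
    destruct (Nat.eqb_spec j (jk k x)) as [->|]; lra.
Qed.

Lemma half_pow_mono m n : (m <= n)%nat -> (/2) ^ n <= (/2) ^ m.
Proof.
  induction 1; [lra|]. simpl. pose proof (pow_lt (/2) m0 ltac:(lra)). lra.
Qed.

Lemma epsb_abs key sgn k w : Rabs (epsb key sgn k w) = 1.
Proof. unfold epsb; destruct (bit key sgn k w); unfold Rabs; destruct (Rcase_abs _); lra. Qed.

Lemma Thp_S key sgn n w : Thp key sgn (S n) w = Thp key sgn n w + epsb key sgn (S n) w * (/2) ^ (S n).
Proof. reflexivity. Qed.

Lemma Thp_diff key sgn m n w : (m <= n)%nat ->
  Rabs (Thp key sgn n w - Thp key sgn m w) <= (/2) ^ m - (/2) ^ n.
Proof.
  induction 1 as [|n Hn IH].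
  - unfold Rminus; rewrite Rplus_opp_r, Rabs_R0; lra.
  - rewrite Thp_S.
    replace (Thp key sgn n w + epsb key sgn (S n) w * (/ 2) ^ S n - Thp key sgn m w)
      with ((Thp key sgn n w - Thp key sgn m w) + epsb key sgn (S n) w * (/ 2) ^ S n) by ring.
    eapply Rle_trans; [apply Rabs_triang|]. rewrite Rabs_mult, epsb_abs.
    rewrite (Rabs_pos_eq ((/2)^S n)) by (apply pow_le; lra). simpl pow in *. lra.
Qed.

Lemma Thp_cauchy key sgn w : Cauchy_crit (fun n => Thp key sgn n w).
Proof.
  intros eps He. destruct (small_pow eps He) as [N HN]. exists N.
  intros n m Hn Hm. unfold Rdist.
  destruct (Nat.le_ge_cases m n) as [h|h].
  - pose proof (Thp_diff key sgn m n w h). pose proof (half_pow_mono N m Hm).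
    pose proof (pow_lt (/2) n ltac:(lra)). lra.
  - pose proof (Thp_diff key sgn n m w h). pose proof (half_pow_mono N n Hn).
    pose proof (pow_lt (/2) m ltac:(lra)). rewrite Rabs_minus_sym. lra.
Qed.

Definition Thl key sgn (w : Omega) : R := proj1_sig (R_complete _ (Thp_cauchy key sgn w)).

Lemma Thl_cv key sgn w : Un_cv (fun n => Thp key sgn n w) (Thl key sgn w).
Proof. unfold Thl. destruct (R_complete _ _); auto. Qed.

Lemma lim_le u l a e M : Un_cv u l -> (forall n, (M <= n)%nat -> Rabs (u n - a) <= e) ->
  Rabs (l - a) <= e.
Proof.
  intros Hu Hb. apply Rnot_lt_le; intro Hlt.
  destruct (Hu (Rabs (l - a) - e) ltac:(lra)) as [N HN].
  specialize (HN (Nat.max N M) ltac:(lia)). specialize (Hb (Nat.max N M) ltac:(lia)).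
  unfold Rdist in HN.
  pose proof (Rabs_triang (l - u (Nat.max N M)) (u (Nat.max N M) - a)).
  replace (l - u (Nat.max N M) + (u (Nat.max N M) - a)) with (l - a) in H by ring.
  rewrite Rabs_minus_sym in HN. lra.
Qed.

Lemma Thl_approx key sgn M w : Rabs (Thl key sgn w - Thp key sgn M w) <= (/2) ^ M.
Proof.
  apply (lim_le _ _ _ _ M (Thl_cv key sgn w)). intros n Hn.
  pose proof (Thp_diff key sgn M n w Hn). pose proof (pow_lt (/2) n ltac:(lra)). lra.
Qed.

Lemma Thl_bound key sgn w : -1 <= Thl key sgn w <= 1.
Proof.
  pose proof (Thl_approx key sgn 0 w). unfold Thp in H; simpl in H.
  rewrite Rminus_0_r in H. apply abs_le_inv in H. lra.
Qed.

Lemma Thp_agree key1 sgn1 key2 sgn2 N w :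
  (forall k, (1 <= k <= N)%nat -> key1 k = key2 k /\ sgn1 k = sgn2 k) ->
  Thp key1 sgn1 N w = Thp key2 sgn2 N w.
Proof.
  intros H. unfold Thp. apply rsum1_ext. intros k Hk. destruct (H k Hk) as [e1 e2].
  unfold epsb, bit. rewrite e1, e2. reflexivity.
Qed.

Lemma Thl_close key1 sgn1 key2 sgn2 N w :
  (forall k, (1 <= k <= N)%nat -> key1 k = key2 k /\ sgn1 k = sgn2 k) ->
  Rabs (Thl key1 sgn1 w - Thl key2 sgn2 w) <= 2 * (/2) ^ N.
Proof.
  intros H. pose proof (Thp_agree _ _ _ _ N w H).
  pose proof (Thl_approx key1 sgn1 N w). pose proof (Thl_approx key2 sgn2 N w).
  rewrite H0 in H1.
  pose proof (Rabs_triang (Thl key1 sgn1 w - Thp key2 sgn2 N w) (Thp key2 sgn2 N w - Thl key2 sgn2 w)).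
  replace (Thl key1 sgn1 w - Thp key2 sgn2 N w + (Thp key2 sgn2 N w - Thl key2 sgn2 w))
    with (Thl key1 sgn1 w - Thl key2 sgn2 w) in H3 by ring.
  rewrite (Rabs_minus_sym (Thp key2 sgn2 N w)) in H3. lra.
Qed.

Lemma int_mul_pow z n : exists m, IZR m = IZR z * 2 ^ n.
Proof.
  induction n as [|n [m Hm]].
  - exists z; simpl; ring.
  - exists (2 * m)%Z. rewrite mult_IZR, Hm. simpl. ring.
Qed.

Lemma sep_le m p X : IZR p < X < IZR p + 1 -> (IZR m <= X <-> (m <= p)%Z).
Proof.
  intros [h1 h2]. split; intros H.
  - assert (IZR m < IZR (p + 1)) by (rewrite plus_IZR; lra). apply lt_IZR in H0. lia.
  - apply IZR_le in H. lra.
Qed.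

Lemma sep_floor N k s t p : (k <= N)%nat ->
  IZR p < 2 ^ N * s < IZR p + 1 -> IZR p < 2 ^ N * t < IZR p + 1 ->
  floorR (2 ^ k * s) = floorR (2 ^ k * t).
Proof.
  intros Hk Hs Ht.
  assert (E : forall z, IZR z <= 2 ^ k * s <-> IZR z <= 2 ^ k * t).
  { intros z. destruct (int_mul_pow z (N - k)) as [m Hm].
    assert (HP : 0 < 2 ^ (N - k)) by (apply pow_lt; lra).
    assert (HN : 2 ^ N = 2 ^ k * 2 ^ (N - k)) by (rewrite <- pow_add; f_equal; lia).
    assert (Hx : forall x, IZR z <= 2 ^ k * x <-> IZR m <= 2 ^ N * x).
    { intros x. rewrite Hm, HN. split; intros H.
      - replace (2 ^ k * 2 ^ (N - k) * x) with ((2 ^ k * x) * 2 ^ (N - k)) by ring.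
        apply Rmult_le_compat_r; lra.
      - replace (2 ^ k * 2 ^ (N - k) * x) with ((2 ^ k * x) * 2 ^ (N - k)) in H by ring.
        apply Rmult_le_reg_r in H; auto. }
    rewrite !Hx, (sep_le m p _ Hs), (sep_le m p _ Ht). tauto. }
  apply floor_unique. pose proof (floor_spec (2 ^ k * t)).
  split; [apply E; lra|].
  apply Rnot_le_lt; intro H1. rewrite <- plus_IZR in H1. apply E in H1.
  rewrite plus_IZR in H1. lra.
Qed.

Lemma nondyadic_sep t N : 0 < t < 1 -> ~ dyadic t ->
  IZR (floorR (2 ^ N * t)) < 2 ^ N * t.
Proof.
  intros Ht Hnd. pose proof (floor_spec (2 ^ N * t)) as [h1 h2].
  destruct h1 as [h1|h1]; auto. exfalso. apply Hnd. split; [lra|].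
  assert (Hp : (0 <= floorR (2 ^ N * t))%Z).
  { apply floor_ge. pose proof (pow_lt 2 N ltac:(lra)). simpl. nra. }
  exists N, (Z.to_nat (floorR (2 ^ N * t))).
  rewrite INR_IZR_INZ, Z2Nat.id by auto. rewrite h1. field. apply pow_nonzero; lra.
Qed.

Lemma neighborhood t N : 0 < t < 1 -> ~ dyadic t ->
  exists del, 0 < del /\ forall s, Rabs (s - t) < del ->
    0 <= s < 1 /\ forall k, (1 <= k <= N)%nat -> keyx s k = keyx t k /\ radsgn s k = radsgn t k.
Proof.
  intros Ht Hnd. set (P := 2 ^ N). assert (HP : 0 < P) by (apply pow_lt; lra).
  set (p := floorR (P * t)).
  pose proof (nondyadic_sep t N Ht Hnd) as h0. fold P p in h0.
  pose proof (floor_spec (P * t)) as [_ h2]. fold p in h2.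
  exists (Rmin (t - IZR p / P) ((IZR p + 1) / P - t)). split.
  - apply Rmin_glb_lt.
    + apply Rlt_Rminus. apply (Rmult_lt_reg_l P); auto. field_simplify; lra.
    + apply Rlt_Rminus. apply (Rmult_lt_reg_l P); auto. field_simplify; lra.
  - intros s Hs.
    pose proof (Rmin_l (t - IZR p / P) ((IZR p + 1) / P - t)).
    pose proof (Rmin_r (t - IZR p / P) ((IZR p + 1) / P - t)).
    assert (Hs2 : - (Rmin (t - IZR p / P) ((IZR p + 1) / P - t)) < s - t < Rmin (t - IZR p / P) ((IZR p + 1) / P - t)).
    { revert Hs; unfold Rabs; destruct (Rcase_abs (s - t)); intros; lra. }
    assert (Hsp : IZR p < P * s < IZR p + 1).
    { split.
      - apply (Rmult_lt_reg_r (/ P)); [apply Rinv_0_lt_compat; auto|].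
        replace (P * s * / P) with s by (field; lra). unfold Rdiv in *; lra.
      - apply (Rmult_lt_reg_r (/ P)); [apply Rinv_0_lt_compat; auto|].
        replace (P * s * / P) with s by (field; lra). unfold Rdiv in *; lra. }
    assert (Hp0 : (0 <= p)%Z) by (apply floor_ge; simpl; nra).
    destruct (int_mul_pow 1 N) as [M HM]. rewrite Rmult_1_l in HM. fold P in HM.
    assert (HpM : IZR (p + 1) <= IZR M).
    { apply IZR_le. assert (IZR p < IZR M) by (rewrite HM; nra). apply lt_IZR in H1. lia. }
    rewrite plus_IZR in HpM. apply IZR_le in Hp0.
    split; [split; nra|].
    intros k Hk. unfold keyx, radsgn, jk.
    assert (Hts : IZR p < 2 ^ N * t < IZR p + 1) by (fold P; lra).
    fold P in Hts.
    rewrite (sep_floor N (k - 1) s t p) by (auto; lia).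
    replace (rademacher k s) with (rademacher k t); [auto|].
    unfold rademacher. destruct (Rlt_dec s 1); [|nra]. destruct (Rlt_dec t 1); [|lra].
    rewrite (sep_floor N k s t p) by (auto; lia). reflexivity.
Qed.

Lemma Un_cv_ext u v l : (forall n, u n = v n) -> Un_cv u l -> Un_cv v l.
Proof. intros H Hu eps He. destruct (Hu eps He) as [N HN]. exists N; intros n Hn. rewrite <- H; auto. Qed.

Lemma cv_const c : Un_cv (fun _ => c) c.
Proof. intros eps He; exists O; intros; unfold Rdist; rewrite Rminus_diag, Rabs_R0; lra. Qed.

Lemma cont_at f x : continuity_pt f x ->
  forall eps, 0 < eps -> exists del, 0 < del /\ forall y, Rabs (y - x) < del -> Rabs (f y - f x) < eps.
Proof.
  intros Hc eps He. destruct (Hc eps He) as [del [Hd H]]. exists del; split; auto.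
  intros y Hy. destruct (Req_dec y x) as [->|ne].
  - rewrite Rminus_diag, Rabs_R0; lra.
  - apply (H y). split; [split; [exact I|auto]|exact Hy].
Qed.

Lemma sin1_pos : 0 < sin 1.
Proof. apply sin_gt_0; pose proof PI2_1; lra. Qed.

Lemma alpha_id (al : cplx) alpha x w : 0 <= x < 1 ->
  Un_cv (fun n => fst (alpha_n al n x w)) (fst (alpha x w)) ->
  Un_cv (fun n => snd (alpha_n al n x w)) (snd (alpha x w)) ->
  alpha x w = cmul (cscale (/ sin 1) al) (cexpi (Thl (keyx x) (radsgn x) w)).
Proof.
  intros Hx H1 H2. set (Th := Thl (keyx x) (radsgn x) w).
  assert (Hs : Un_cv (fun n => 2 ^ n * sin (yk n) * / sin 1) (1 * / sin 1)).
  { apply CV_mult; [apply sinc_cv|apply cv_const]. }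
  assert (Hc : Un_cv (fun n => cos (Thp (keyx x) (radsgn x) n w)) (cos Th)).
  { apply continuity_seq; [apply continuity_cos|apply Thl_cv]. }
  assert (Hsn : Un_cv (fun n => sin (Thp (keyx x) (radsgn x) n w)) (sin Th)).
  { apply continuity_seq; [apply continuity_sin|apply Thl_cv]. }
  assert (E1 : Un_cv (fun n => fst (alpha_n al n x w))
     ((1 * / sin 1) * (fst al * cos Th - snd al * sin Th))).
  { eapply Un_cv_ext; [|apply CV_mult; [exact Hs|apply CV_minus; apply CV_mult; [apply cv_const|exact Hc|apply cv_const|exact Hsn]]].
    intros n. unfold alpha_n, cscale, cmul, cexpi. simpl fst. simpl snd.
    rewrite sqrt_ratio, Theta_rep by auto. unfold Rdiv. ring. }
  assert (E2 : Un_cv (fun n => snd (alpha_n al n x w))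
     ((1 * / sin 1) * (fst al * sin Th + snd al * cos Th))).
  { eapply Un_cv_ext; [|apply CV_mult; [exact Hs|apply CV_plus; apply CV_mult; [apply cv_const|exact Hsn|apply cv_const|exact Hc]]].
    intros n. unfold alpha_n, cscale, cmul, cexpi. simpl fst. simpl snd.
    rewrite sqrt_ratio, Theta_rep by auto. unfold Rdiv. ring. }
  apply injective_projections.
  - rewrite (UL_sequence _ _ _ H1 E1). unfold cmul, cscale, cexpi; simpl. fold Th. ring.
  - rewrite (UL_sequence _ _ _ H2 E2). unfold cmul, cscale, cexpi; simpl. fold Th. ring.
Qed.

Lemma deriv_int (g F : R -> R) c t : 0 < t < 1 ->
  (forall s, 0 <= s <= 1 -> exists pr : Riemann_integrable g 0 s, F s = c + RiemannInt pr) ->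
  (forall eps, 0 < eps -> exists del, 0 < del /\ forall s, Rabs (s - t) < del -> Rabs (g s - g t) <= eps) ->
  derivable_pt_lim F t (g t).
Proof.
  intros Ht HF Hg eps He.
  destruct (Hg (eps / 2) ltac:(lra)) as [del [Hd Hdel]].
  assert (Hp : 0 < Rmin del (Rmin t (1 - t))) by (repeat apply Rmin_glb_lt; lra).
  exists (mkposreal _ Hp). intros h Hh0 Hh. simpl in Hh.
  pose proof (Rmin_l del (Rmin t (1 - t))). pose proof (Rmin_r del (Rmin t (1 - t))).
  pose proof (Rmin_l t (1 - t)). pose proof (Rmin_r t (1 - t)).
  assert (Hhb : - Rmin del (Rmin t (1 - t)) < h < Rmin del (Rmin t (1 - t))).
  { revert Hh; unfold Rabs; destruct (Rcase_abs h); intros; lra. }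
  destruct (HF t ltac:(lra)) as [prt Et]. destruct (HF (t + h) ltac:(lra)) as [prs Es].
  assert (Hb : forall x, Rabs (x - t) < del -> g t - eps / 2 <= g x <= g t + eps / 2).
  { intros x Hx. apply Hdel in Hx. revert Hx; unfold Rabs; destruct (Rcase_abs (g x - g t)); intros; lra. }
  rewrite Es, Et.
  destruct (Rlt_dec 0 h) as [hp|hn].
  - assert (pr2 : Riemann_integrable g t (t + h)) by (apply (RiemannInt_P23 prs); lra).
    pose proof (RiemannInt_P26 prt pr2 prs) as E.
    replace (c + RiemannInt prs - (c + RiemannInt prt)) with (RiemannInt pr2) by lra.
    pose proof (RiemannInt_const_bound (l := g t - eps / 2) (u := g t + eps / 2) pr2 ltac:(lra)) as B.
    assert (B' : forall x, t < x < t + h -> g t - eps / 2 <= g x <= g t + eps / 2).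
    { intros x Hx. apply Hb. rewrite Rabs_pos_eq; lra. }
    specialize (B B'). replace (t + h - t) with h in B by ring.
    assert (Hq : g t - eps/2 <= RiemannInt pr2 / h <= g t + eps / 2).
    { split; [apply (Rmult_le_reg_r h); auto; field_simplify; lra|].
      apply (Rmult_le_reg_r h); auto; field_simplify; lra. }
    unfold Rabs; destruct (Rcase_abs _); lra.
  - assert (hn' : h < 0) by lra.
    assert (pr2 : Riemann_integrable g (t + h) t) by (apply (RiemannInt_P23 prt); lra).
    pose proof (RiemannInt_P26 prs pr2 prt) as E.
    replace (c + RiemannInt prs - (c + RiemannInt prt)) with (- RiemannInt pr2) by lra.
    pose proof (RiemannInt_const_bound (l := g t - eps / 2) (u := g t + eps / 2) pr2 ltac:(lra)) as B.
    assert (B' : forall x, t + h < x < t -> g t - eps / 2 <= g x <= g t + eps / 2).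
    { intros x Hx. apply Hb. rewrite Rabs_left; lra. }
    specialize (B B'). replace (t - (t + h)) with (- h) in B by ring.
    assert (Hq : g t - eps/2 <= - RiemannInt pr2 / h <= g t + eps / 2).
    { replace (- RiemannInt pr2 / h) with (RiemannInt pr2 / (- h)) by (field; lra).
      split; [apply (Rmult_le_reg_r (-h)); [lra|]; field_simplify; lra|].
      apply (Rmult_le_reg_r (-h)); [lra|]; field_simplify; lra. }
    unfold Rabs; destruct (Rcase_abs _); lra.
Qed.

Lemma Th_cont t w : 0 < t < 1 -> ~ dyadic t -> forall d, 0 < d ->
  exists del, 0 < del /\ forall s, Rabs (s - t) < del ->
    0 <= s < 1 /\ Rabs (Thl (keyx s) (radsgn s) w - Thl (keyx t) (radsgn t) w) < d.
Proof.
  intros Ht Hnd d Hd. destruct (small_pow (d / 2) ltac:(lra)) as [N HN].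
  destruct (neighborhood t N Ht Hnd) as [del [Hdel H]]. exists del; split; auto.
  intros s Hs. destruct (H s Hs) as [Hs01 Hk]. split; auto.
  pose proof (Thl_close (keyx s) (radsgn s) (keyx t) (radsgn t) N w Hk). lra.
Qed.

Lemma unit_bound z : fst z ^ 2 + snd z ^ 2 = 1 -> Rabs (fst z) <= 1 /\ Rabs (snd z) <= 1.
Proof.
  intros H. split; unfold Rabs; destruct (Rcase_abs _); nra.
Qed.

Lemma comp_cont (z : cplx) t w : 0 < t < 1 -> ~ dyadic t -> fst z ^ 2 + snd z ^ 2 = 1 ->
  forall eps, 0 < eps -> exists del, 0 < del /\ forall s, Rabs (s - t) < del ->
    0 <= s < 1 /\
    Rabs (fst z * cos (Thl (keyx s) (radsgn s) w) - snd z * sin (Thl (keyx s) (radsgn s) w)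
       - (fst z * cos (Thl (keyx t) (radsgn t) w) - snd z * sin (Thl (keyx t) (radsgn t) w))) <= eps /\
    Rabs (fst z * sin (Thl (keyx s) (radsgn s) w) + snd z * cos (Thl (keyx s) (radsgn s) w)
       - (fst z * sin (Thl (keyx t) (radsgn t) w) + snd z * cos (Thl (keyx t) (radsgn t) w))) <= eps.
Proof.
  intros Ht Hnd Hz eps He. set (T := Thl (keyx t) (radsgn t) w).
  destruct (cont_at cos T (continuity_cos T) (eps / 2) ltac:(lra)) as [d1 [Hd1 H1]].
  destruct (cont_at sin T (continuity_sin T) (eps / 2) ltac:(lra)) as [d2 [Hd2 H2]].
  destruct (Th_cont t w Ht Hnd (Rmin d1 d2) ltac:(apply Rmin_glb_lt; lra)) as [del [Hdel H]].
  exists del; split; auto. intros s Hs. destruct (H s Hs) as [Hs01 Hc]. fold T in Hc.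
  split; auto. set (S := Thl (keyx s) (radsgn s) w) in *.
  pose proof (Rmin_l d1 d2). pose proof (Rmin_r d1 d2).
  specialize (H1 S ltac:(lra)). specialize (H2 S ltac:(lra)).
  destruct (unit_bound z Hz) as [B1 B2].
  assert (Hcomb : forall a b c d, Rabs a <= 1 -> Rabs b <= 1 -> Rabs c < eps / 2 -> Rabs d < eps / 2 ->
    Rabs (a * c + b * d) <= eps).
  { intros a0 b0 c0 d0 ha hb hc hd. eapply Rle_trans; [apply Rabs_triang|]. rewrite !Rabs_mult.
    assert (Rabs a0 * Rabs c0 <= 1 * (eps / 2)) by (apply Rmult_le_compat; try apply Rabs_pos; lra).
    assert (Rabs b0 * Rabs d0 <= 1 * (eps / 2)) by (apply Rmult_le_compat; try apply Rabs_pos; lra).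
    lra. }
  split.
  - replace (fst z * cos S - snd z * sin S - (fst z * cos T - snd z * sin T))
      with (fst z * (cos S - cos T) + (- snd z) * (sin S - sin T)) by ring.
    apply Hcomb; auto. rewrite Rabs_Ropp; auto.
  - replace (fst z * sin S + snd z * cos S - (fst z * sin T + snd z * cos T))
      with (fst z * (sin S - sin T) + snd z * (cos S - cos T)) by ring.
    apply Hcomb; auto.
Qed.

Lemma cexpi_inj z th1 th2 : fst z ^ 2 + snd z ^ 2 = 1 -> -1 <= th1 <= 1 -> -1 <= th2 <= 1 ->
  cmul z (cexpi th1) = cmul z (cexpi th2) -> th1 = th2.
Proof.
  intros Hz H1 H2 E. unfold cmul, cexpi in E; simpl in E. injection E as E1 E2.
  assert (Hs : sin th1 = sin th2).
  { destruct z as [z1 z2]; cbn [fst snd] in *.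
    assert (sin th1 - sin th2 = z1 * (z1 * (sin th1 - sin th2) + z2 * (cos th1 - cos th2))
       - z2 * (z1 * (cos th1 - cos th2) - z2 * (sin th1 - sin th2))).
    { replace (sin th1 - sin th2) with ((z1 ^ 2 + z2 ^ 2) * (sin th1 - sin th2)) at 1 by (rewrite Hz; ring). ring. }
    assert (z1 * (sin th1 - sin th2) + z2 * (cos th1 - cos th2) = 0) by lra.
    assert (z1 * (cos th1 - cos th2) - z2 * (sin th1 - sin th2) = 0) by lra.
    rewrite H0, H3 in H. lra. }
  pose proof PI2_1.
  rewrite <- (asin_sin th1), <- (asin_sin th2) by lra. rewrite Hs; auto.
Qed.

Theorem mainTheorem9
  (a b : cplx) (Hab : cnorm (csub b a) = sin 1)
  (alpha : R -> Omega -> cplx)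
  (Halpha : forall t w, 0 <= t <= 1 ->
     Un_cv (fun n => fst (alpha_n (csub b a) n t w)) (fst (alpha t w)) /\
     Un_cv (fun n => snd (alpha_n (csub b a) n t w)) (snd (alpha t w)))
  (f : R -> Omega -> cplx)
  (Hf : forall t w, 0 <= t <= 1 ->
     exists (pr1 : Riemann_integrable (fun s => fst (alpha s w)) 0 t)
            (pr2 : Riemann_integrable (fun s => snd (alpha s w)) 0 t),
       f t w = (fst a + RiemannInt pr1, snd a + RiemannInt pr2)) :
  forall t, 0 <= t <= 1 -> ~ dyadic t ->
    (forall w, exists v, has_deriv (fun s => f s w) t v) /\
    (forall (th1 th2 : R) (cl1 cl2 : bool), -1 <= th1 <= th2 -> th2 <= 1 ->
       prob_is
         (fun w => exists v, has_deriv (fun s => f s w) t v /\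
                     in_arc (cscale (/ cnorm (csub b a)) (csub b a)) th1 th2 cl1 cl2 v)
         ((th2 - th1) / 2)).
Proof.
  intros t Ht Hnd.
  assert (Ht' : 0 < t < 1).
  { assert (t <> 0).
    { intro E; apply Hnd; split; [lra|]. exists O, O. rewrite E; simpl; field. }
    assert (t <> 1).
    { intro E; apply Hnd; split; [lra|]. exists O, 1%nat. rewrite E; simpl; field. }
    lra. }
  set (z0 := cscale (/ sin 1) (csub b a)).
  assert (Hz : fst z0 ^ 2 + snd z0 ^ 2 = 1).
  { unfold cnorm in Hab. pose proof sin1_pos.
    assert (E : fst (csub b a) ^ 2 + snd (csub b a) ^ 2 = sin 1 ^ 2).
    { rewrite <- Hab. rewrite pow2_sqrt; auto. apply Rplus_le_le_0_compat; apply pow2_ge_0. }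
    unfold z0, cscale; cbn [fst snd].
    replace ((/ sin 1 * fst (csub b a)) ^ 2 + (/ sin 1 * snd (csub b a)) ^ 2)
      with ((fst (csub b a) ^ 2 + snd (csub b a) ^ 2) / sin 1 ^ 2) by (field; lra).
    rewrite E. field. lra. }
  assert (Hid : forall x w, 0 <= x < 1 ->
    alpha x w = cmul z0 (cexpi (Thl (keyx x) (radsgn x) w))).
  { intros x w Hx. destruct (Halpha x w ltac:(lra)) as [H1 H2]. apply alpha_id; auto. }
  assert (Hder : forall w, has_deriv (fun s => f s w) t (alpha t w)).
  { intros w. split.
    - apply (deriv_int (fun s => fst (alpha s w)) (fun s => fst (f s w)) (fst a) t Ht').
      + intros s Hs. destruct (Hf s w Hs) as [pr1 [pr2 E]]. exists pr1. rewrite E; reflexivity.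
      + intros eps He. destruct (comp_cont z0 t w Ht' Hnd Hz eps He) as [del [Hdel H]].
        exists del; split; auto. intros s Hs. destruct (H s Hs) as [Hs01 [B1 B2]].
        rewrite (Hid s w Hs01), (Hid t w ltac:(lra)). unfold cmul, cexpi; simpl fst. exact B1.
    - apply (deriv_int (fun s => snd (alpha s w)) (fun s => snd (f s w)) (snd a) t Ht').
      + intros s Hs. destruct (Hf s w Hs) as [pr1 [pr2 E]]. exists pr2. rewrite E; reflexivity.
      + intros eps He. destruct (comp_cont z0 t w Ht' Hnd Hz eps He) as [del [Hdel H]].
        exists del; split; auto. intros s Hs. destruct (H s Hs) as [Hs01 [B1 B2]].
        rewrite (Hid s w Hs01), (Hid t w ltac:(lra)). unfold cmul, cexpi; simpl snd. exact B2. }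
  split.
  - intros w. exists (alpha t w). apply Hder.
  - intros th1 th2 cl1 cl2 Hth Hth2.
    rewrite Hab. fold z0.
    apply (prob_interval (keyx t) (fun k => eq_refl) (radsgn t) (Thl (keyx t) (radsgn t))
             (Thl_approx (keyx t) (radsgn t))); try lra.
    + intros w [v [Hv [th [h1 [h2 Ev]]]]].
      assert (Ev' : v = alpha t w).
      { destruct Hv as [D1 D2]. destruct (Hder w) as [D1' D2'].
        apply injective_projections; eapply uniqueness_limite; eauto. }
      rewrite Ev', Hid in Ev by lra.
      assert (Hth' : -1 <= th <= 1) by (destruct cl1, cl2; lra).
      pose proof (cexpi_inj z0 _ _ Hz (Thl_bound _ _ w) Hth' Ev) as ->.
      destruct cl1, cl2; lra.
    + intros w HnA.
      destruct (Rle_dec (Thl (keyx t) (radsgn t) w) th1) as [h|h]; [left; auto|].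
      destruct (Rle_dec th2 (Thl (keyx t) (radsgn t) w)) as [h'|h']; [right; auto|].
      exfalso. apply HnA. exists (alpha t w). split; [apply Hder|].
      exists (Thl (keyx t) (radsgn t) w). split; [destruct cl1; lra|]. split; [destruct cl2; lra|].
      apply Hid; lra.
Qed.
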